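(* In the setting below, let $\phi_1:=\phi/\|\phi\|$ with $\|\phi\|=\sqrt{|\gamma(\phi,\phi)|}$ be the unitary section of $\mathcal U^M$ obtained from $\phi$. Then the connection one-form $i_\epsilon\sum A_idz^i+i_\epsilon\sum A_{\bar i}d\bar z^i$ of the pull back connection on $\mathcal U^M$ with respect to $\phi_1$ (i.e. $\mathcal D_i\phi_1=i_\epsilon A_i\phi_1$, $\mathcal D_{\bar i}\phi_1=i_\epsilon A_{\bar i}\phi_1$) is given by $$A_i=\tfrac12A^h_i,\qquad A_{\bar i}=\tfrac12\overline{A^h_i},$$ where $i_\epsilon A^h_i=\gamma(\partial_i\phi,\phi)/\gamma(\phi,\phi)$.
   Context: Let $\epsilon\in\{-1,1\}$, $\mathbb{C}_\epsilon=\mathbb{R}[i_\epsilon]$, $i_\epsilon^2=\epsilon$, conjugation $\overline{a+i_\epsilon b}=a-i_\epsilon b$. $V=\mathbb{C}_\epsilon^{2n+2}$ with coordinates $(z^i,w_i)$, $\Omega=\sum dz^i\wedge dw_i$, $\gamma=i_\epsilon\Omega(\cdot,\bar\cdot)$ ($\epsilon$-Hermitian); $V'=\{\gamma(v,v)\neq0\}$; $P(V')$ the set of lines $\mathbb{C}_\epsilon v$, $v\in V'$; $\pi_V:V'\to P(V')$; $\mathcal U\subset P(V')\times V$ the universal line bundle with Chern connection $\mathcal D_Xv=$ $\gamma$-orthogonal projection onto $\mathcal U$ of $d_Xv$. Setting: $(M,J,g,\nabla,\xi)$ is a regular conical affine special $\epsilon$-K\''ahler manifold of real dimension $2n+2$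 (an $\epsilon$-K\''ahler manifold with parallel $g$-skew $J$, $J^2=\epsilon\mathrm{Id}$, flat torsion-free $\nabla$ with $\nabla\omega=0$ for $\omega=\epsilon g(J\cdot,\cdot)$ and $(\nabla_XJ)Y=(\nabla_YJ)X$, and a vector field $\xi$ with $\nabla\xi=D\xi=\mathrm{Id}$ for the Levi-Civita connection $D$; regular: $g(\xi,\xi)$ nowhere zero and the leaf space of $\mathrm{span}\{\xi,J\xi\}$ is a Hausdorff $\epsilon$-complex manifold onto which the quotient is a holomorphic submersion). $\phi:M\to V'$ is a conical $\epsilon$-K\''ahlerian Lagrangian holomorphic immersion inducing the special geometry (i.e. $\phi^*\gamma$ nondegenerate, $\phi^*\Omega=0$, position vector field of $V$ tangent along $\phi$, $g=\phi^*\mathrm{Re}\gamma$), regarded as a holomorphic section of $\mathcal U^M=(\pi_V\circ\phi)^*\mathcal U$ with the pull back connection $\mathcal D$ (defined by $(f^*\mathcal D)_Xf^*s=\mathcal D_{dfX}s$). $(z^i)$ are conical special holomorphic coordinates $z^i\circ\phi$, $\partial_i=\partial/\partial z^i$, $\partial_{\bar i}=\partial/\partial\bar z^i$, $\mathcal D_i=\mathcal D_{\partial_i}$, $\mathcal D_{\bar i}=\mathcal D_{\partial_{\bar i}}$. *)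

(* Defs.v *)
(* Local (chart) model of the setting:
   the epsilon-complex numbers C_eps = R[i_eps], i_eps^2 = eps, are pairs of reals;
   V = C_eps^(2n+2) is  nat -> Ce  (indices 0..n are z^0..z^n, n+1..2n+1 are w_0..w_n);
   a point of M is given by its conical special holomorphic coordinates
   (z^0..z^n) : nat -> Ce  (only indices 0..n are used). *)
From Stdlib Require Import Reals.
From Coquelicot Require Import Coquelicot.
Open Scope R_scope.

Record Ce := mkCe { re : R ; im : R }.

Definition czero : Ce := mkCe 0 0.
Definition cre (r : R) : Ce := mkCe r 0.
Definition ie : Ce := mkCe 0 1.
Definition cadd (u v : Ce) : Ce := mkCe (re u + re v) (im u + im v).
Definition copp (u : Ce) : Ce := mkCe (- re u) (- im u).
Definition cmul (eps : R) (u v : Ce) : Ce :=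
  mkCe (re u * re v + eps * (im u * im v)) (re u * im v + im u * re v).
Definition cconj (u : Ce) : Ce := mkCe (re u) (- im u).
Definition cinv (eps : R) (u : Ce) : Ce :=
  let d := re u * re u - eps * (im u * im u) in mkCe (re u / d) (- im u / d).
Fixpoint csum (m : nat) (f : nat -> Ce) : Ce :=
  match m with O => czero | S m' => cadd (csum m' f) (f m') end.

Definition Vec := nat -> Ce.
Definition vadd (v u : Vec) : Vec := fun k => cadd (v k) (u k).
Definition vscal (eps : R) (c : Ce) (v : Vec) : Vec := fun k => cmul eps c (v k).

(** Omega = sum_i dz^i /\ dw_i *)
Definition Omega (eps : R) (n : nat) (v u : Vec) : Ce :=
  csum (S n) (fun i => cadd (cmul eps (v i) (u (S n + i)%nat))
                            (copp (cmul eps (v (S n + i)%nat) (u i)))).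
Definition gamma (eps : R) (n : nat) (v u : Vec) : Ce :=
  cmul eps ie (Omega eps n v (fun k => cconj (u k))).

Definition Pt := nat -> Ce.
Definition shift (p : Pt) (j : nat) (c : Ce) : Pt :=
  fun k => if Nat.eqb k j then cadd (p k) c else p k.

Definition open_chart (n : nat) (U : Pt -> Prop) : Prop :=
  forall p, U p -> exists d, 0 < d /\
    forall q, (forall j, (j <= n)%nat ->
                 Rabs (re (q j) - re (p j)) < d /\ Rabs (im (q j) - im (p j)) < d) ->
              U q.

Definition dxR (F : Pt -> R) (j : nat) (p : Pt) : R :=
  Derive (fun t => F (shift p j (cre t))) 0.
Definition dyR (F : Pt -> R) (j : nat) (p : Pt) : R :=
  Derive (fun t => F (shift p j (mkCe 0 t))) 0.
Definition dx (F : Pt -> Ce) (j : nat) (p : Pt) : Ce :=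
  mkCe (dxR (fun q => re (F q)) j p) (dxR (fun q => im (F q)) j p).
Definition dy (F : Pt -> Ce) (j : nat) (p : Pt) : Ce :=
  mkCe (dyR (fun q => re (F q)) j p) (dyR (fun q => im (F q)) j p).

(** partial_j = 1/2 (d/dx^j + eps i_eps d/dy^j),
    partial_{bar j} = 1/2 (d/dx^j - eps i_eps d/dy^j)
    (so that partial_j z^j = 1, partial_j bar z^j = 0, etc.) *)
Definition wirt (eps : R) (F : Pt -> Ce) (j : nat) (p : Pt) : Ce :=
  cmul eps (cre (1/2)) (cadd (dx F j p) (cmul eps (cmul eps (cre eps) ie) (dy F j p))).
Definition wirtbar (eps : R) (F : Pt -> Ce) (j : nat) (p : Pt) : Ce :=
  cmul eps (cre (1/2)) (cadd (dx F j p) (copp (cmul eps (cmul eps (cre eps) ie) (dy F j p)))).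

Definition vdx (s : Pt -> Vec) (j : nat) (p : Pt) : Vec := fun k => dx (fun q => s q k) j p.
Definition vdy (s : Pt -> Vec) (j : nat) (p : Pt) : Vec := fun k => dy (fun q => s q k) j p.
Definition vwirt (eps : R) (s : Pt -> Vec) (j : nat) (p : Pt) : Vec :=
  fun k => wirt eps (fun q => s q k) j p.
Definition vwirtbar (eps : R) (s : Pt -> Vec) (j : nat) (p : Pt) : Vec :=
  fun k => wirtbar eps (fun q => s q k) j p.

Definition proj (eps : R) (n : nat) (l v : Vec) : Vec :=
  vscal eps (cmul eps (gamma eps n v l) (cinv eps (gamma eps n l l))) l.

(** pull back connection on U^M along phi, applied to a section s of U^M
    (s p in the line C_eps (phi p)):  D_X s = gamma-orthogonal projection onto
    C_eps (phi p) of d_X s, extended C_eps-linearly to partial_j, partial_{bar j}. *)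
Definition Dhol (eps : R) (n : nat) (phi s : Pt -> Vec) (j : nat) (p : Pt) : Vec :=
  proj eps n (phi p) (vwirt eps s j p).
Definition Dbar (eps : R) (n : nat) (phi s : Pt -> Vec) (j : nat) (p : Pt) : Vec :=
  proj eps n (phi p) (vwirtbar eps s j p).

(** ||v|| = sqrt |gamma(v,v)|  (gamma(v,v) is real) *)
Definition normV (eps : R) (n : nat) (v : Vec) : R := sqrt (Rabs (re (gamma eps n v v))).
Definition unitary (eps : R) (n : nat) (phi : Pt -> Vec) (p : Pt) : Vec :=
  vscal eps (cre (/ normV eps n (phi p))) (phi p).

(** d phi (X) for the real tangent vector X = sum_j a_j d/dx^j + b_j d/dy^j *)
Definition dphi (eps : R) (n : nat) (phi : Pt -> Vec) (p : Pt) (a b : nat -> R) : Vec :=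
  fun k => csum (S n) (fun j => cadd (cmul eps (cre (a j)) (vdx phi j p k))
                                     (cmul eps (cre (b j)) (vdy phi j p k))).

Definition conical_Lagrangian_holomorphic_immersion
  (eps : R) (n : nat) (U : Pt -> Prop) (phi : Pt -> Vec) : Prop :=
  (forall p, U p -> forall j k, (j <= n)%nat ->
     ex_derive (fun t => re (phi (shift p j (cre t)) k)) 0 /\
     ex_derive (fun t => im (phi (shift p j (cre t)) k)) 0 /\
     ex_derive (fun t => re (phi (shift p j (mkCe 0 t)) k)) 0 /\
     ex_derive (fun t => im (phi (shift p j (mkCe 0 t)) k)) 0) /\
  (forall p, U p -> forall j k, (j <= n)%nat -> vwirtbar eps phi j p k = czero) /\
  (forall p, U p -> gamma eps n (phi p) (phi p) <> czero) /\
  (forall p, U p -> forall i, (i <= n)%nat -> phi p i = p i) /\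
  (forall p, U p -> forall a b a' b',
     Omega eps n (dphi eps n phi p a b) (dphi eps n phi p a' b') = czero) /\
  (forall p, U p -> forall a b,
     (forall a' b', gamma eps n (dphi eps n phi p a b) (dphi eps n phi p a' b') = czero) ->
     forall j, (j <= n)%nat -> a j = 0 /\ b j = 0) /\
  (* conical: position vector field tangent along phi *)
  (forall p, U p -> exists a b, phi p = dphi eps n phi p a b).

(* Main.v *)
Require Import Defs.
From Stdlib Require Import Reals Lra FunctionalExtensionality.
From Coquelicot Require Import Coquelicot.
Open Scope R_scope.

Lemma Ce_ext (x y : Ce) : re x = re y -> im x = im y -> x = y.
Proof. destruct x, y; simpl; intros; subst; reflexivity. Qed.

Ltac ce := apply Ce_ext; cbn [re im cmul cadd copp cconj cre ie czero cinv]; ring.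

Lemma dmul (f g : R -> R) a b : is_derive f 0 a -> is_derive g 0 b ->
  is_derive (fun t => f t * g t) 0 (a * g 0 + f 0 * b).
Proof. intros H1 H2. exact (is_derive_mult f g 0 a b H1 H2 Rmult_comm). Qed.
Lemma dplus (f g : R -> R) a b : is_derive f 0 a -> is_derive g 0 b ->
  is_derive (fun t => f t + g t) 0 (a + b).
Proof. intros H1 H2. exact (is_derive_plus f g 0 a b H1 H2). Qed.
Lemma dopp (f : R -> R) a : is_derive f 0 a -> is_derive (fun t => - f t) 0 (- a).
Proof. intros H1. exact (is_derive_opp f 0 a H1). Qed.
Lemma dconst (c : R) : is_derive (fun _ => c) 0 0.
Proof. exact (is_derive_const c 0). Qed.
Lemma dext (f : R -> R) a b : is_derive f 0 a -> a = b -> is_derive f 0 b.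
Proof. intros; subst; auto. Qed.

Definition CD (F : R -> Ce) (D : Ce) : Prop :=
  is_derive (fun t => re (F t)) 0 (re D) /\ is_derive (fun t => im (F t)) 0 (im D).

Lemma CD_ext F D D' : CD F D -> D = D' -> CD F D'.
Proof. intros; subst; auto. Qed.
Lemma CD_const c : CD (fun _ => c) czero.
Proof. split; apply dconst. Qed.
Lemma CD_add F G a b : CD F a -> CD G b -> CD (fun t => cadd (F t) (G t)) (cadd a b).
Proof. intros [H1 H2] [H3 H4]; split; simpl; apply dplus; auto. Qed.
Lemma CD_opp F a : CD F a -> CD (fun t => copp (F t)) (copp a).
Proof. intros [H1 H2]; split; simpl; apply dopp; auto. Qed.
Lemma CD_conj F a : CD F a -> CD (fun t => cconj (F t)) (cconj a).
Proof. intros [H1 H2]; split; simpl; auto; apply dopp; auto. Qed.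
Lemma CD_mul eps F G a b : CD F a -> CD G b ->
  CD (fun t => cmul eps (F t) (G t)) (cadd (cmul eps a (G 0)) (cmul eps (F 0) b)).
Proof.
  intros [H1 H2] [H3 H4]; split; simpl.
  - eapply dext. apply dplus. apply dmul; eauto. apply (is_derive_scal (fun t => im (F t) * im (G t))).
    apply dmul; eauto. simpl. ring.
  - eapply dext. apply dplus; apply dmul; eauto. simpl. ring.
Qed.
Lemma CD_csum m (f : R -> nat -> Ce) D : (forall i, CD (fun t => f t i) (D i)) ->
  CD (fun t => csum m (f t)) (csum m D).
Proof.
  intros H; induction m; simpl. apply CD_const. apply CD_add; auto.
Qed.

Lemma csum_add m f g : csum m (fun i => cadd (f i) (g i)) = cadd (csum m f) (csum m g).
Proof. induction m; simpl. ce. rewrite IHm. ce. Qed.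
Lemma csum_mul eps m a f : csum m (fun i => cmul eps a (f i)) = cmul eps a (csum m f).
Proof. induction m; simpl. ce. rewrite IHm. ce. Qed.
Lemma csum_conj m f : csum m (fun i => cconj (f i)) = cconj (csum m f).
Proof. induction m; simpl. ce. rewrite IHm. ce. Qed.
Lemma csum_ext m f g : (forall i, f i = g i) -> csum m f = csum m g.
Proof. intros H; induction m; simpl; auto. rewrite IHm, H; auto. Qed.

Lemma gamma_sum eps n v u : gamma eps n v u = csum (S n) (fun i => cmul eps ie
  (cadd (cmul eps (v i) (cconj (u (S n + i)%nat))) (copp (cmul eps (v (S n + i)%nat) (cconj (u i)))))).
Proof. unfold gamma, Omega. rewrite csum_mul. reflexivity. Qed.

Lemma gamma_herm eps n v u : gamma eps n v u = cconj (gamma eps n u v).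
Proof. rewrite !gamma_sum, <- csum_conj. apply csum_ext; intros; ce. Qed.
Lemma gamma_addl eps n v v' u : gamma eps n (vadd v v') u = cadd (gamma eps n v u) (gamma eps n v' u).
Proof. rewrite !gamma_sum, <- csum_add. apply csum_ext; intros; unfold vadd; ce. Qed.
Lemma gamma_scall eps n a v u : gamma eps n (vscal eps a v) u = cmul eps a (gamma eps n v u).
Proof. rewrite !gamma_sum, <- csum_mul. apply csum_ext; intros; unfold vscal; ce. Qed.
Lemma gamma_scalr eps n a v u : gamma eps n v (vscal eps a u) = cmul eps (cconj a) (gamma eps n v u).
Proof. rewrite !gamma_sum, <- csum_mul. apply csum_ext; intros; unfold vscal; ce. Qed.
Lemma gamma_im0 eps n v : im (gamma eps n v v) = 0.
Proof. pose proof (f_equal im (gamma_herm eps n v v)) as H. cbn [im cconj] in H. lra. Qed.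

Lemma CD_gamma eps n (v u : R -> Vec) v' u' :
  (forall k, CD (fun t => v t k) (v' k)) -> (forall k, CD (fun t => u t k) (u' k)) ->
  CD (fun t => gamma eps n (v t) (u t)) (cadd (gamma eps n v' (u 0)) (gamma eps n (v 0) u')).
Proof.
  intros Hv Hu.
  assert (E : (fun t => gamma eps n (v t) (u t)) = fun t => csum (S n) (fun i => cmul eps ie
  (cadd (cmul eps (v t i) (cconj (u t (S n + i)%nat))) (copp (cmul eps (v t (S n + i)%nat) (cconj (u t i))))))).
  { apply functional_extensionality; intros; apply gamma_sum. }
  rewrite E. eapply CD_ext. apply CD_csum. intros i.
  eapply CD_ext. apply CD_mul. apply CD_const. apply CD_add. apply CD_mul; [apply Hv| apply CD_conj, Hu].
  apply CD_opp. apply CD_mul; [apply Hv| apply CD_conj, Hu]. reflexivity.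
  rewrite !gamma_sum, <- csum_add. apply csum_ext; intros; ce.
Qed.

Lemma shift0 p j : shift p j czero = p.
Proof. apply functional_extensionality; intros k; unfold shift.
  destruct (Nat.eqb k j); auto. ce. Qed.

Lemma inv_sqrt_abs_deriv (f : R -> R) (G0 df : R) : is_derive f 0 df -> f 0 = G0 -> G0 <> 0 ->
  is_derive (fun t => / sqrt (Rabs (f t))) 0 (-(1/2) * (/ sqrt (Rabs G0)) * df / G0).
Proof.
  intros Hd E HG. subst G0.
  assert (Ha : is_derive (fun t => Rabs (f t)) 0 (sign (f 0) * df)) by (apply is_derive_Rabs; auto).
  assert (Hp : 0 < Rabs (f 0)) by (apply Rabs_pos_lt; auto).
  pose proof (is_derive_sqrt _ _ _ Ha Hp) as Hs. cbv beta in Hs.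
  assert (Hs0 : sqrt (Rabs (f 0)) <> 0) by (apply Rgt_not_eq, sqrt_lt_R0; auto).
  pose proof (is_derive_inv _ _ _ Hs Hs0) as Hi.
  replace (-(1/2) * (/ sqrt (Rabs (f 0))) * df / f 0) with (- (sign (f 0) * df / (2 * sqrt (Rabs (f 0)))) / sqrt (Rabs (f 0)) ^ 2).
  exact Hi.
  assert (Hsq := sqrt_sqrt (Rabs (f 0)) (Rlt_le _ _ Hp)).
  generalize dependent (f 0). intros G0 HG Ha Hp Hs Hs0 Hi Hsq.
  destruct (Rlt_dec 0 G0) as [Hlt|Hlt].
  - rewrite sign_eq_1 by auto. rewrite Rabs_right in * by lra.
    replace (sqrt G0 ^ 2) with G0 by (simpl; lra). field; split; auto.
  - rewrite sign_eq_m1 by lra. rewrite Rabs_left in * by lra.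
    replace (sqrt (- G0) ^ 2) with (- G0) by (simpl; lra). field; split; auto.
Qed.

Lemma unit_deriv eps n phi p j (d : R -> Ce) (ph' : Vec) k :
  d 0 = czero ->
  (forall k, CD (fun t => phi (shift p j (d t)) k) (ph' k)) ->
  gamma eps n (phi p) (phi p) <> czero ->
  CD (fun t => unitary eps n phi (shift p j (d t)) k)
     (cadd (cmul eps (cre (-(1/2) * (/ normV eps n (phi p)) *
               re (cadd (gamma eps n ph' (phi p)) (gamma eps n (phi p) ph')) /
               re (gamma eps n (phi p) (phi p)))) (phi p k))
           (cmul eps (cre (/ normV eps n (phi p))) (ph' k))).
Proof.
  intros Hd0 Hph HG.
  pose proof (CD_gamma eps n _ _ _ _ Hph Hph) as Hg.
  cbv beta in Hg. rewrite Hd0, shift0 in Hg.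
  assert (HGr : re (gamma eps n (phi p) (phi p)) <> 0).
  { intro E. apply HG. apply Ce_ext. rewrite E; reflexivity. rewrite gamma_im0; reflexivity. }
  set (Gd := re (cadd (gamma eps n ph' (phi p)) (gamma eps n (phi p) ph'))).
  set (G0 := re (gamma eps n (phi p) (phi p))).
  assert (Hr : CD (fun t => cre (/ normV eps n (phi (shift p j (d t)))))
     (cre (-(1/2) * (/ sqrt (Rabs G0)) * Gd / G0))).
  { split; cbn [re im cre].
    + unfold normV. apply (inv_sqrt_abs_deriv (fun t => re (gamma eps n (phi (shift p j (d t))) (phi (shift p j (d t)))))).
      apply (proj1 Hg). rewrite Hd0, shift0; reflexivity. auto.
    + apply dconst. }
  unfold unitary.
  eapply CD_ext. apply (CD_mul eps _ _ _ _ Hr (Hph k)).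
  cbv beta. rewrite Hd0, shift0. unfold normV. reflexivity.
Qed.

Lemma dx_CD F j p D : CD (fun t => F (shift p j (cre t))) D -> dx F j p = D.
Proof. intros [H1 H2]. unfold dx, dxR. apply Ce_ext; simpl; apply is_derive_unique; auto. Qed.
Lemma dy_CD F j p D : CD (fun t => F (shift p j (mkCe 0 t))) D -> dy F j p = D.
Proof. intros [H1 H2]. unfold dy, dyR. apply Ce_ext; simpl; apply is_derive_unique; auto. Qed.

Lemma holo_pt eps x y : eps = 1 \/ eps = -1 ->
  cmul eps (cre (1/2)) (cadd x (copp (cmul eps (cmul eps (cre eps) ie) y))) = czero ->
  x = cmul eps (cre (1/2)) (cadd x (cmul eps (cmul eps (cre eps) ie) y)) /\ y = cmul eps ie x.
Proof.
  destruct x as [a b], y as [c d]. intros He H. injection H; cbn. intros E1 E2.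
  destruct He; subst eps; split; apply Ce_ext; cbn; lra.
Qed.

Lemma gamma_zero eps n u : gamma eps n (fun _ => czero) u = czero.
Proof. rewrite gamma_sum. transitivity (csum (S n) (fun _ => czero)).
  apply csum_ext; intros; ce. generalize (S n) as m. induction m; simpl. reflexivity. rewrite IHm. ce.
Qed.

Theorem mainTheorem9 (eps : R) (Heps : eps = 1 \/ eps = -1) (n : nat)
  (U : Pt -> Prop) (HU : open_chart n U) (phi : Pt -> Vec)
  (Hphi : conical_Lagrangian_holomorphic_immersion eps n U phi)
  (Ah : nat -> Pt -> Ce)
  (HAh : forall j p, (j <= n)%nat -> U p ->
     cmul eps ie (Ah j p) =
     cmul eps (gamma eps n (vwirt eps phi j p) (phi p))
              (cinv eps (gamma eps n (phi p) (phi p)))) :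
  forall j p, (j <= n)%nat -> U p ->
    Dhol eps n phi (unitary eps n phi) j p =
      vscal eps (cmul eps ie (cmul eps (cre (1/2)) (Ah j p))) (unitary eps n phi p) /\
    Dbar eps n phi (unitary eps n phi) j p =
      vscal eps (cmul eps ie (cmul eps (cre (1/2)) (cconj (Ah j p)))) (unitary eps n phi p).
Proof.
  intros j p Hj Hp. destruct Hphi as [H1 [H2 [H3 _]]].
  specialize (HAh j p Hj Hp). specialize (H3 p Hp).
  assert (Hx : forall k, CD (fun t => phi (shift p j (cre t)) k) (vdx phi j p k)).
  { intros k; destruct (H1 p Hp j k Hj) as [a [b _]].
    unfold vdx, dx, dxR; split; cbn [re im]; apply Derive_correct; auto. }
  assert (Hy : forall k, CD (fun t => phi (shift p j (mkCe 0 t)) k) (vdy phi j p k)).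
  { intros k; destruct (H1 p Hp j k Hj) as [_ [_ [a b]]].
    unfold vdy, dy, dyR; split; cbn [re im]; apply Derive_correct; auto. }
  assert (Ux := fun k => unit_deriv eps n phi p j cre _ k eq_refl Hx H3).
  assert (Uy := fun k => unit_deriv eps n phi p j (fun t => mkCe 0 t) _ k eq_refl Hy H3).
  assert (Hw : vdx phi j p = vwirt eps phi j p /\ vdy phi j p = vscal eps ie (vdx phi j p)).
  { split; apply functional_extensionality; intros k;
    destruct (holo_pt eps _ _ Heps (H2 p Hp j k Hj)) as [E1 E2]; [exact E1| exact E2]. }
  destruct Hw as [Hw1 Hw2].
  set (c := / normV eps n (phi p)) in *.
  set (Gam := gamma eps n (phi p) (phi p)) in *.
  set (Gx := re (cadd (gamma eps n (vdx phi j p) (phi p)) (gamma eps n (phi p) (vdx phi j p)))) in *.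
  set (Gy := re (cadd (gamma eps n (vdy phi j p) (phi p)) (gamma eps n (phi p) (vdy phi j p)))) in *.
  set (Z := gamma eps n (vwirt eps phi j p) (phi p)) in *.
  assert (EGx : Gx = 2 * re Z).
  { unfold Gx, Z. rewrite Hw1, (gamma_herm _ _ (phi p)). cbn [re cadd cconj]. ring. }
  assert (EGy : Gy = 2 * eps * im Z).
  { unfold Gy, Z. rewrite Hw2, Hw1, gamma_scall, gamma_scalr, (gamma_herm _ _ (phi p)).
    cbn [re im cadd cconj cmul ie]. ring. }
  assert (Gim : im Gam = 0) by apply gamma_im0.
  assert (Gre : re Gam <> 0).
  { intro E. apply H3. apply Ce_ext; [rewrite E|rewrite Gim]; reflexivity. }
  clearbody Gx Gy.
  split.
  - assert (EW : vwirt eps (unitary eps n phi) j p =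
      vadd (vscal eps (cmul eps (cre (1/2)) (cadd (cre (-(1/2) * c * Gx / re Gam))
             (cmul eps (cmul eps (cre eps) ie) (cre (-(1/2) * c * Gy / re Gam))))) (phi p))
           (vscal eps (cre c) (vwirt eps phi j p))).
    { apply functional_extensionality; intros k. unfold vwirt at 1, wirt at 1.
      rewrite (dx_CD _ _ _ _ (Ux k)), (dy_CD _ _ _ _ (Uy k)).
      unfold vadd, vscal, vwirt, wirt, vdx, vdy. ce. }
    unfold Dhol, proj. rewrite EW, gamma_addl, !gamma_scall. fold Z Gam.
    unfold unitary; fold c. apply functional_extensionality; intros k. unfold vscal.
    destruct Gam as [g1 g2]; cbn [re im] in *. subst g2.
    destruct Z as [z1 z2]; destruct (Ah j p) as [a1 a2]; destruct (phi p k) as [f1 f2].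
    cbn [re im] in *. rewrite EGx, EGy.
    unfold cinv, cmul, cadd, cre, ie in *; cbn [re im] in *.
    injection HAh; intros Ea Eb.
    assert (Hg : g1 * g1 <> 0) by (intro; apply Gre; nra).
    destruct Heps; subst eps.
    + assert (A1 : a1 = z2 / g1).
      { transitivity (0*a2+1*a1); [ring|]. first [rewrite Ea | rewrite Eb]. field; repeat split; auto; (intro; apply Hg; lra). }
      assert (A2 : a2 = z1 / g1).
      { transitivity (0*a1+1*(1*a2)); [ring|]. first [rewrite Ea | rewrite Eb]. field; repeat split; auto; (intro; apply Hg; lra). }
      subst a1 a2. apply Ce_ext; cbn [re im]; field; auto.
    + assert (A1 : a1 = z2 / g1).
      { transitivity (0*a2+1*a1); [ring|]. first [rewrite Ea | rewrite Eb]. field; repeat split; auto; (intro; apply Hg; lra). }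
      assert (A2 : a2 = - (z1 / g1)).
      { transitivity (- (0*a1+ -1*(1*a2))); [ring|]. first [rewrite Ea | rewrite Eb]. field; repeat split; auto; (intro; apply Hg; lra). }
      subst a1 a2. apply Ce_ext; cbn [re im]; field; auto.
  - assert (EW : vwirtbar eps (unitary eps n phi) j p =
      vadd (vscal eps (cmul eps (cre (1/2)) (cadd (cre (-(1/2) * c * Gx / re Gam))
             (copp (cmul eps (cmul eps (cre eps) ie) (cre (-(1/2) * c * Gy / re Gam)))))) (phi p))
           (vscal eps (cre c) (vwirtbar eps phi j p))).
    { apply functional_extensionality; intros k. unfold vwirtbar at 1, wirtbar at 1.
      rewrite (dx_CD _ _ _ _ (Ux k)), (dy_CD _ _ _ _ (Uy k)).
      unfold vadd, vscal, vwirtbar, wirtbar, vdx, vdy. ce. }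
    assert (E0 : vwirtbar eps phi j p = fun _ => czero).
    { apply functional_extensionality; intros k. apply H2; auto. }
    unfold Dbar, proj. rewrite EW, gamma_addl, !gamma_scall, E0, gamma_zero. fold Gam.
    unfold unitary; fold c. apply functional_extensionality; intros k. unfold vscal.
    destruct Gam as [g1 g2]; cbn [re im] in *. subst g2.
    destruct Z as [z1 z2]; destruct (Ah j p) as [a1 a2]; destruct (phi p k) as [f1 f2].
    cbn [re im] in *. rewrite EGx, EGy.
    unfold cinv, cmul, cadd, cre, ie, cconj, copp, czero in *; cbn [re im] in *.
    injection HAh; intros Ea Eb.
    assert (Hg : g1 * g1 <> 0) by (intro; apply Gre; nra).
    destruct Heps; subst eps.
    + assert (A1 : a1 = z2 / g1).
      { transitivity (0*a2+1*a1); [ring|]. first [rewrite Ea | rewrite Eb]. field; repeat split; auto; (intro; apply Hg; lra). }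
      assert (A2 : a2 = z1 / g1).
      { transitivity (0*a1+1*(1*a2)); [ring|]. first [rewrite Ea | rewrite Eb]. field; repeat split; auto; (intro; apply Hg; lra). }
      subst a1 a2. apply Ce_ext; cbn [re im]; field; auto.
    + assert (A1 : a1 = z2 / g1).
      { transitivity (0*a2+1*a1); [ring|]. first [rewrite Ea | rewrite Eb]. field; repeat split; auto; (intro; apply Hg; lra). }
      assert (A2 : a2 = - (z1 / g1)).
      { transitivity (- (0*a1+ -1*(1*a2))); [ring|]. first [rewrite Ea | rewrite Eb]. field; repeat split; auto; (intro; apply Hg; lra). }
      subst a1 a2. apply Ce_ext; cbn [re im]; field; auto.
Qed.
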